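(* Let $(X,\mathrm{d})$ be a metric space, $P\subseteq X$ finite with $n$ points, $r,\varepsilon>0$, and let $\mathcal{F}$ be an $(r,r_2,p_1,p_2)$-sensitive family of hash functions on $X$ with $r_2\le r(1+\varepsilon)$. For any query point $q\in X$, the output set $S$ of the query procedure of the structure $\mathcal{A}(P,r,\varepsilon)$ (described in the context) satisfies $N_P(q,r)\subseteq S$ with probability at least $1-n^{1-c\ln\frac52}$.
   Context: Notation: $N_P(x,r)$ is the set of points of $P\setminus\{x\}$ at distance at most $r$ from $x$. A family $\mathcal{F}$ of functions $X\to\mathbb{Z}$ with a probability distribution is $(r_1,r_2,p_1,p_2)$-sensitive ($r_1<r_2$, $1>p_1>p_2>0$) if for all $x,y\in X$: $\mathrm{d}(x,y)\le r_1\Rightarrow \Pr[f(x)=f(y)]\ge p_1$ and $\mathrm{d}(x,y)\ge r_2\Rightarrow \Pr[f(x)=f(y)]\le p_2$. Structure $\mathcal{A}(P,r,\varepsilon)$: let $\varrho=\ln p_1/\ln p_2$, $k=\lceil \ln n/\ln(1/p_2)\rceil$, $L=\lceil n^\varrho/p_1\rceil$, and let $\mathcal{G}$ be the family of maps $g=(f_1,\dots,f_k):X\to\mathbb{Z}^k$ whose coordinates are drawn independently from $\mathcal{F}$. For each of $\lceil c\ln n\rceil$ rounds ($c>0$ a fixed constant), independently draw $g_1,\dots,g_L$ from $\mathcal{G}$ and insert every $p\in P$ into hash table $H_j$ under key $g_j(p)$. Query: given $q$, for every round and every $j$, retrieve all points stored in $H_j$ under key $g_j(q)$ and insert each such $p$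 into $S$ iff $\mathrm{d}(q,p)\le r$; return $S$. *)

(* Defs.v *)
From HB Require Import structures.
From mathcomp Require Import all_boot all_order all_algebra.
From mathcomp Require Import all_classical all_reals all_analysis.
Set Implicit Arguments. Unset Strict Implicit. Unset Printing Implicit Defensive.
Import Order.TTheory GRing.Theory Num.Theory.
Local Open Scope classical_set_scope.
Local Open Scope ring_scope.

Definition is_metric (R : realType) (X : Type) (dist : X -> X -> R) : Prop :=
  [/\ forall x y, 0 <= dist x y,
      forall x y, dist x y = 0 <-> x = y,
      forall x y, dist x y = dist y x &
      forall x y z, dist x z <= dist x y + dist y z].

(* A family of hash functions X -> Z with a probability distribution:
   the family is a measurable space U of "labels", [ev u] is the hash
   function with label u, and [Pf] is the distribution. *)
Definition sensitive (R : realType) (X : Type) (dist : X -> X -> R)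
  (dU : measure_display) (U : measurableType dU) (Pf : probability U R)
  (ev : U -> X -> int) (r1 r2 p1 p2 : R) : Prop :=
  [/\ r1 < r2, 0 < p2, p2 < p1, p1 < 1 &
      forall x y,
        (dist x y <= r1 -> (p1%:E <= Pf [set u | ev u x = ev u y])%E) /\
        (r2 <= dist x y -> (Pf [set u | ev u x = ev u y] <= p2%:E)%E)].

Definition mutually_independent (R : realType) (d : measure_display)
  (Omega : measurableType d) (mu : probability Omega R) (I : finType)
  (dU : measure_display) (U : measurableType dU) (Y : I -> Omega -> U) : Prop :=
  forall (J : {set I}) (A : I -> set U),
    (forall i, i \in J -> measurable (A i)) ->
    mu (\bigcap_(i in [set i | i \in J]) (Y i @^-1` A i)) =
    (\prod_(i in J) mu (Y i @^-1` A i))%E.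

Definition rho (R : realType) (p1 p2 : R) : R := ln p1 / ln p2.
Definition num_k (R : realType) (p2 : R) (n : nat) : nat :=
  `|Num.ceil (ln (n%:R : R) / ln (p2^-1))|%N.
Definition num_L (R : realType) (p1 p2 : R) (n : nat) : nat :=
  `|Num.ceil (powR (n%:R : R) (rho p1 p2) / p1)|%N.
Definition num_rounds (R : realType) (c : R) (n : nat) : nat :=
  `|Num.ceil (c * ln (n%:R : R))|%N.

(* The hash function g = (f_1,...,f_k) drawn for round t, table j, coordinate i
   is ev (Y (t, j, i) omega).  Output set S of the query at q. *)
Definition query_output (R : realType) (X : eqType) (dist : X -> X -> R)
  (P : seq X) (r : R) (Rn Ln kn : nat) (dU : measure_display)
  (U : measurableType dU) (ev : U -> X -> int)
  (h : 'I_Rn * 'I_Ln * 'I_kn -> U) (q : X) : seq X :=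
  [seq p <- P | [exists t : 'I_Rn, exists j : 'I_Ln,
                   [forall i : 'I_kn, ev (h (t, j, i)) p == ev (h (t, j, i)) q]]
                && (dist q p <= r)].

Definition near_set (R : realType) (X : eqType) (dist : X -> X -> R)
  (P : seq X) (x : X) (r : R) : seq X :=
  [seq p <- P | (p != x) && (dist x p <= r)].

(* Main.v *)
Require Import Defs.
From HB Require Import structures.
From mathcomp Require Import all_boot all_order all_algebra.
From mathcomp Require Import all_classical all_reals all_analysis.
From mathcomp Require Import ring lra.
Import Order.TTheory GRing.Theory Num.Theory.
Local Open Scope classical_set_scope.
Local Open Scope ring_scope.


Section Pr.
Context {R : realType} {d : measure_display} {Omega : measurableType d}
  (mu : probability Omega R).

Definition pr (A : set Omega) : R := fine (mu A).

Lemma prE A : measurable A -> mu A = (pr A)%:E.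
Proof. by move=> mA; rewrite /pr fineK // fin_num_measure. Qed.

Lemma pr_ge0 A : 0 <= pr A.
Proof. by apply: fine_ge0; apply: measure_ge0. Qed.

Lemma pr_le1 A : measurable A -> pr A <= 1.
Proof. by move=> mA; rewrite -lee_fin -prE // probability_le1. Qed.

Lemma prT : pr setT = 1.
Proof. by rewrite /pr probability_setT. Qed.

Lemma prC A : measurable A -> pr (~` A) = 1 - pr A.
Proof.
move=> mA; have := probability_setC mu mA.
by rewrite prE ?prE //; [move=> [] | apply: measurableC].
Qed.

Lemma prDI A B : measurable A -> measurable B ->
  pr A = pr (A `&` ~` B) + pr (A `&` B).
Proof.
move=> mA mB; have := measureDI mu mA mB; rewrite setDE.
have m1 : measurable (A `&` ~` B) by apply: measurableI => //; apply: measurableC.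
have m2 : measurable (A `&` B) by apply: measurableI.
by move=> h; apply: EFin_inj; rewrite EFinD -(prE _ mA) -(prE _ m1) -(prE _ m2).
Qed.

Lemma pr_le A B : measurable A -> measurable B -> A `<=` B -> pr A <= pr B.
Proof. by move=> mA mB AB; rewrite -lee_fin -(prE _ mA) -(prE _ mB); apply: le_measure => //; rewrite inE. Qed.

Lemma prU_le A B : measurable A -> measurable B -> pr (A `|` B) <= pr A + pr B.
Proof.
move=> mA mB.
have mI : measurable (A `&` B) by apply: measurableI.
have mU : measurable (A `|` B) by apply: measurableU.
have fA : (mu A < +oo)%E by rewrite (prE _ mA) ltry.
have h := @measureUfinl _ _ _ mu _ _ mA mB fA.
have : pr (A `|` B) = pr A + pr B - pr (A `&` B).
  by apply: EFin_inj; rewrite EFinB EFinD -(prE _ mA) -(prE _ mB) -(prE _ mI) -(prE _ mU).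
move=> ->; rewrite lerBlDr lerDl; exact: pr_ge0.
Qed.

End Pr.


Lemma bigcap_fsplit (T : Type) (I : finType) (F : I -> set T) (J : {set I}) a :
  a \in J ->
  \bigcap_(i in [set i | i \in J]) F i =
  F a `&` \bigcap_(i in [set i | i \in J :\ a]) F i.
Proof.
move=> aJ; apply/seteqP; split => x /=.
- move=> h; split; first exact: h.
  by move=> i /=; rewrite in_setD1 => /andP[_ iJ]; apply: h.
- move=> [Fa h] i /= iJ; have [->//|ia] := eqVneq i a.
  by apply: h => /=; rewrite in_setD1 ia.
Qed.

Arguments bigcap_fsplit {T I} F {J a}.

Lemma bigcap_fset0 (T : Type) (I : finType) (F : I -> set T) :
  \bigcap_(i in [set i | i \in @finset.set0 I]) F i = setT.
Proof. by apply/seteqP; split => x //= _ i /=; rewrite finset.in_set0. Qed.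

Section Indep.
Context {R : realType} {d : measure_display} {Omega : measurableType d}
  (mu : probability Omega R).

Lemma bigcap_meas (I : finType) (F : I -> set Omega) (J : {set I}) :
  (forall i, measurable (F i)) ->
  measurable (\bigcap_(i in [set i | i \in J]) F i).
Proof. by move=> mF; apply: fin_bigcap_measurable => //; exact: finite_finset. Qed.

Lemma indep_compl (I : finType) (E : I -> set Omega) (s : R) :
 (forall i, measurable (E i)) ->
 (forall J : {set I}, pr mu (\bigcap_(i in [set i | i \in J]) E i) = s ^+ #|J|) ->
 forall J K : {set I}, (forall i, i \in J -> i \notin K) ->
 pr mu ((\bigcap_(i in [set i | i \in J]) ~` E i) `&`
        \bigcap_(i in [set i | i \in K]) E i) = (1 - s) ^+ #|J| * s ^+ #|K|.
Proof.
move=> mE hE J.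
have mEC : forall i, measurable (~` E i) by move=> i; apply: measurableC.
elim: {J}#|J| {-2}J (erefl #|J|) => [|n IH] J cJ K dJK.
  move/eqP: cJ; rewrite cards_eq0 => /eqP ->.
  by rewrite bigcap_fset0 setTI hE cards0 expr0 mul1r.
have [a aJ] : exists a, a \in J.
  by apply/set0Pn; rewrite -card_gt0 cJ.
have aK : a \notin K by apply: dJK.
have cJ' : #|J :\ a| = n by move: cJ; rewrite (cardsD1 a J) aJ add1n => -[].
have dJ'K : forall i, i \in J :\ a -> i \notin K.
  by move=> i; rewrite in_setD1 => /andP[_ /dJK].
have dJ'aK : forall i, i \in J :\ a -> i \notin a |: K.
  by move=> i; rewrite in_setD1 in_setU1 => /andP[ia /dJK iK]; rewrite (negPf ia).
set X := (\bigcap_(i in [set i | i \in J :\ a]) ~` E i) `&`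
         \bigcap_(i in [set i | i \in K]) E i.
have mX : measurable X by apply: measurableI; apply: bigcap_meas.
have e1 : (\bigcap_(i in [set i | i \in J]) ~` E i) `&`
          \bigcap_(i in [set i | i \in K]) E i = X `&` ~` E a.
  rewrite (bigcap_fsplit _ aJ) /X; apply/seteqP; split => x /=; tauto.
have e2 : (\bigcap_(i in [set i | i \in J :\ a]) ~` E i) `&`
          \bigcap_(i in [set i | i \in a |: K]) E i = X `&` E a.
  rewrite (bigcap_fsplit _ (setU11 a K)) setU1K // /X.
  apply/seteqP; split => x /=; tauto.
have := prDI mu _ _ mX (mE a); rewrite -e1 -e2 (IH _ cJ' _ dJ'K) (IH _ cJ' _ dJ'aK).
rewrite cardsU1 aK cJ' add1n => h.
apply: (@addIr _ ((1-s)^+n * s^+(#|K|).+1)); rewrite -h cJ !exprS; ring.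
Qed.

End Indep.

Section Union.
Context {R : realType} {d : measure_display} {Omega : measurableType d}
  (mu : probability Omega R).

Lemma union_bound (T : eqType) (s : seq T) (B : T -> set Omega) (beta : R) :
  (forall p, measurable (B p)) -> (forall p, p \in s -> pr mu (B p) <= beta) ->
  measurable [set w | exists p, p \in s /\ B p w] /\
  pr mu [set w | exists p, p \in s /\ B p w] <= (size s)%:R * beta.
Proof.
move=> mB; elim: s => [|x s IH] hb.
  have -> : [set w | exists p, p \in [::] /\ B p w] = set0.
    by apply/seteqP; split => w //= [p []].
  by rewrite /pr measure0 /= mul0r; split.
have [mS hS] := IH (fun p ps => hb p (mem_behead (s:=x :: s) ps)).
have -> : [set w | exists p, p \in x :: s /\ B p w] =
          B x `|` [set w | exists p, p \in s /\ B p w].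
  apply/seteqP; split => w /=.
  - move=> [p []]; rewrite in_cons => /orP[/eqP -> | ps] hp; first by left.
    by right; exists p.
  - case=> [hx | [p [ps hp]]]; first by exists x; rewrite mem_head.
    by exists p; rewrite in_cons ps orbT.
split; first exact: measurableU.
apply: le_trans (prU_le mu _ _ (mB x) mS) _.
rewrite /= -add1n natrD mulrDl mul1r lerD //; apply: hb; exact: mem_head.
Qed.

End Union.


Lemma ln52_le1 (R : realType) : ln (5 / 2 : R) <= 1.
Proof.
have e1 : expR (1 : R) = expR (8^-1) ^+ 8.
  by rewrite -expRM_natl; congr expR; rewrite divff.
have h1 : (9/8 : R) ^+ 8 <= expR (8^-1) ^+ 8.
  apply: lerXn2r; rewrite ?nnegrE ?expR_ge0 //.
  have := expR_ge1Dx (8^-1 : R); lra.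
have h2 : (5/2 : R) <= (9/8) ^+ 8.
  rewrite !exprS expr0; lra.
rewrite -[leRHS](expRK 1) ler_ln ?posrE ?expR_gt0 //; lra.
Qed.

Lemma ceil_nat (R : realType) (x : R) : 0 <= x ->
  x <= (`|Num.ceil x|%N)%:R < x + 1.
Proof.
move=> x0; have c0 : 0 <= Num.ceil x by rewrite ceil_ge0; lra.
rewrite natr_absz ger0_norm //.
have /andP[h1 h2] := ceil_itv x; rewrite h2 /=.
by move: h1; rewrite intrB /=; lra.
Qed.

Lemma num_bound (R : realType) (p1 p2 c : R) (n : nat) :
  0 < p2 -> p2 < p1 -> p1 < 1 -> 0 < c -> (1 < n)%N ->
  n%:R * (1 - p1 ^+ num_k p2 n) ^+ (num_rounds c n * num_L p1 p2 n)
  <= powR n%:R (1 - c * ln (5/2)).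
Proof.
move=> p20 p21 p11 c0 n1.
have p10 : 0 < p1 by apply: lt_trans p21.
have nR : 1 < (n%:R : R) by rewrite ltr1n.
have n0 : 0 < (n%:R : R) by apply: lt_trans nR.
have lnn : 0 < ln (n%:R : R) by apply: ln_gt0.
have lp2 : ln p2 < 0 by apply: ln_lt0; rewrite p20 /=; lra.
have lp1 : ln p1 < 0 by apply: ln_lt0; rewrite p10 /=.
set x := ln (n%:R : R) / ln p2^-1.
have lv : ln p2^-1 = - ln p2 by rewrite lnV ?posrE.
have x0 : 0 < x by rewrite /x lv divr_gt0 // oppr_gt0.
set k := num_k p2 n.
have /andP[_ kx] := @ceil_nat _ _ (ltW x0).
have {kx} kx : (k%:R : R) < x + 1 by exact: kx.
set N := powR (n%:R : R) (rho p1 p2).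
have NE : N = expR (rho p1 p2 * ln (n%:R : R)).
  by rewrite /N /powR gt_eqF.
have N0 : 0 < N by rewrite NE expR_gt0.
set alpha := p1 ^+ k.
have aE : alpha = expR (k%:R * ln p1) by rewrite expRM_natl lnK // posrE.
have xe : x * ln p1 = - (rho p1 p2 * ln (n%:R : R)).
  rewrite /x lv /rho; field; lra.
have aN : p1 <= alpha * N.
  rewrite aE NE -expRD -[leLHS](lnK (x:=p1)) ?posrE // ler_expR.
  rewrite -[rho p1 p2 * _]opprK -xe -mulNr -mulrDl -[leLHS]mul1r ler_nM2r //.
  lra.
set L := num_L p1 p2 n.
have /andP[LN _] := @ceil_nat _ _ (ltW (divr_gt0 N0 p10)).
have {LN} LN : N / p1 <= (L%:R : R) by exact: LN.
have aL : 1 <= alpha * L%:R.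
  have a0 : 0 <= alpha by rewrite exprn_ge0 // ltW.
  have : alpha * (N / p1) <= alpha * L%:R by apply: ler_wpM2l.
  by apply: le_trans; rewrite mulrA ler_pdivlMr // mul1r.
set Rn := num_rounds c n.
have /andP[Rc _] := @ceil_nat _ _ (ltW (mulr_gt0 c0 lnn)).
have {Rc} Rc : c * ln (n%:R : R) <= Rn%:R by exact: Rc.
have a1 : alpha <= 1 by rewrite exprn_ile1 // ltW.
have a0 : 0 <= alpha by rewrite exprn_ge0 // ltW.
have b1 : (1 - alpha) ^+ (Rn * L) <= expR (- alpha) ^+ (Rn * L).
  apply: lerXn2r; rewrite ?nnegrE ?expR_ge0 //; first lra.
  have := expR_ge1Dx (- alpha); lra.
have b2 : expR (- alpha) ^+ (Rn * L) <= expR (- (c * ln (n%:R : R))).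
  rewrite -expRM_natl ler_expR natrM.
  rewrite mulrN lerN2; apply: (le_trans Rc).
  rewrite -mulrA ler_peMr // mulrC //.
have ec : n%:R * expR (- (c * ln (n%:R : R))) = powR (n%:R : R) (1 - c).
  have nE : (n%:R : R) = expR (ln n%:R) by rewrite lnK // posrE.
  rewrite /powR gt_eqF // {1}nE -expRD.
  congr expR; ring.
apply: (le_trans (ler_wpM2l (ltW n0) (le_trans b1 b2))).
rewrite ec; apply: ler_powR; first exact: ltW.
by rewrite lerD2l lerN2 ger_pMr // ln52_le1.
Qed.


Theorem lemma1 (R : realType) (X : eqType) (dist : X -> X -> R)
  (P : seq X) (r eps r2 p1 p2 c : R)
  (dU : measure_display) (U : measurableType dU) (Pf : probability U R)
  (ev : U -> X -> int)
  (d : measure_display) (Omega : measurableType d) (mu : probability Omega R)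
  (Y : 'I_(num_rounds c (size P)) * 'I_(num_L p1 p2 (size P))
       * 'I_(num_k p2 (size P)) -> Omega -> U)
  (q : X) :
  is_metric dist ->
  uniq P ->
  0 < r -> 0 < eps -> 0 < c ->
  sensitive dist Pf ev r r2 p1 p2 ->
  r2 <= r * (1 + eps) ->
  (forall x y, measurable [set u | ev u x = ev u y]) ->
  (forall a, measurable_fun setT (Y a)) ->
  (forall a A, measurable A -> mu (Y a @^-1` A) = Pf A) ->
  mutually_independent mu Y ->
  ((1 - powR ((size P)%:R : R) (1 - c * ln (5 / 2)))%:E <=
   mu [set omega | {subset near_set dist P q r <=
                    query_output dist P r ev (fun a => Y a omega) q}])%E.
Proof.
move=> hmet uP r0 eps0 c0 hsens hr2 mA mY hY hind.
have [ns1 | n1] := leqP (size P) 1.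
  have [/eqP n0 | n0] := boolP (size P == 0%N); last first.
    have e1 : size P = 1%N by apply/eqP; rewrite eqn_leq ns1 lt0n n0.
    have -> : ((size P)%:R : R) = 1 by rewrite e1.
    by rewrite powR1 subrr measure_ge0.
  have hs : near_set dist P q r = [::].
    by apply/eqP; rewrite -size_eq0 -leqn0 -n0 size_filter count_size.
  rewrite hs.
  have -> : [set omega | {subset [::] <= query_output dist P r ev (fun a => Y a omega) q}] = setT.
    by apply/seteqP; split => // w _ p.
  rewrite probability_setT lee_fin lerBlDr lerDl; exact: powR_ge0.
have [_ p2gt0 p21 p11 hsf] := hsens.
have p10 : 0 < p1 by apply: (lt_trans p2gt0).
have [_ _ dsym _] := hmet.
pose A := fun p : X => [set u : U | ev u p = ev u q].
pose E := fun p a =>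
  \bigcap_(i in [set i | i \in [set: 'I_(num_k p2 (size P))]%SET]) (Y (a, i) @^-1` A p).
have mYA : forall b p, measurable (Y b @^-1` A p).
  by move=> b p; rewrite -[_ @^-1` _]setTI; apply: (mY b) => //; apply: mA.
have mE : forall p a, measurable (E p a) by move=> p a; rewrite /E; apply: bigcap_meas => i; exact: mYA.
pose f := fun p => pr Pf (A p).
have indE : forall p (J : {set _}),
    pr mu (\bigcap_(a in [set a | a \in J]) E p a) = (f p ^+ num_k p2 (size P)) ^+ #|J|.
  move=> p J.
  have seteq : \bigcap_(a in [set a | a \in J]) E p a =
      \bigcap_(b in [set b | b \in finset.setX J [set: 'I_(num_k p2 (size P))]%SET]) (Y b @^-1` A p).
    apply/seteqP; split => w /=.
    - move=> h [a i] /=; rewrite finset.in_setX /= => /andP[aJ _]; exact: (h a aJ i (finset.in_setT i)).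
    - by move=> h a aJ i _; apply: (h (a, i)); rewrite /= finset.in_setX aJ finset.in_setT.
  have := hind (finset.setX J [set: 'I_(num_k p2 (size P))]%SET) (fun _ => A p) (fun _ _ => mA p q).
  rewrite -seteq => h.
  rewrite /pr h.
  under eq_bigr => i _ do rewrite (hY i _ (mA p q)) (prE Pf _ (mA p q)).
  rewrite prodEFin /= prodr_const cardsX cardsT card_ord -exprM mulnC //.
pose B := fun p => \bigcap_(a in [set a | a \in [set: 'I_(num_rounds c (size P)) * 'I_(num_L p1 p2 (size P))]%SET]) ~` E p a.
have mB : forall p, measurable (B p).
  by move=> p; rewrite /B; apply: bigcap_meas => a; apply: measurableC.
have prB : forall p, pr mu (B p) =
    (1 - f p ^+ num_k p2 (size P)) ^+ (num_rounds c (size P) * num_L p1 p2 (size P)).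
  move=> p.
  have h := indep_compl mu _ _ _ (mE p) (indE p) [set: _]%SET finset.set0
    (fun i _ => negbT (finset.in_set0 i)).
  rewrite bigcap_fset0 setIT cards0 expr0 mulr1 cardsT card_prod !card_ord in h.
  by rewrite /B h.
pose s := near_set dist P q r.
pose beta := (1 - p1 ^+ num_k p2 (size P)) ^+ (num_rounds c (size P) * num_L p1 p2 (size P)).
have hbB : forall p, p \in s -> pr mu (B p) <= beta.
  move=> p; rewrite /s /near_set mem_filter => /andP[/andP[_ dqp] _].
  have fp1 : p1 <= f p.
    have [h _] := hsf p q; rewrite dsym in h; have := h dqp.
    by rewrite /f (prE Pf _ (mA p q)) lee_fin.
  have f1 : f p <= 1 by apply: pr_le1; apply: mA.
  have fk : p1 ^+ num_k p2 (size P) <= f p ^+ num_k p2 (size P).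
    by apply: lerXn2r; rewrite ?nnegrE // ltW // (lt_le_trans p10).
  have fk1 : f p ^+ num_k p2 (size P) <= 1 by apply: exprn_ile1 => //; apply: pr_ge0.
  rewrite prB; apply: lerXn2r; rewrite ?nnegrE ?subr_ge0 ?lerB //.
  by rewrite exprn_ile1 // ltW.
have [mBad hBad] := union_bound mu _ s B beta mB hbB.
set Bad := [set w | exists p, p \in s /\ B p w] in mBad hBad.
have eG : [set omega | {subset s <= query_output dist P r ev (fun a => Y a omega) q}] = ~` Bad.
  apply/seteqP; split => w /=.
  - move=> hsub [p [ps hB]].
    have := hsub p ps; rewrite /query_output mem_filter => /andP[/andP[hex _] _].
    move/existsP: hex => [t /existsP [j /forallP hi]].
    apply: (hB (t, j) (finset.in_setT _)) => i _ /=.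
    exact: (eqP (hi i)).
  - move=> hnot p ps.
    have ps' := ps; move: ps'; rewrite /s /near_set mem_filter => /andP[/andP[_ dqp] pP].
    rewrite /query_output mem_filter dqp pP !andbT.
    apply: contraT => hne; exfalso; apply: hnot; exists p; split => // -[t j] _ hE.
    move/negP: hne; apply; apply/existsP; exists t; apply/existsP; exists j; apply/forallP => i.
    by apply/eqP; exact: (hE i (finset.in_setT i)).
rewrite eG (prE mu _ (measurableC mBad)) (prC mu _ mBad) lee_fin lerD2l lerN2.
apply: (le_trans hBad).
have sn : (size s <= size P)%N by rewrite /s /near_set size_filter count_size.
have b0 : 0 <= beta.
  by apply: exprn_ge0; rewrite subr_ge0; apply: exprn_ile1; apply: ltW.
apply: (le_trans _ (@num_bound _ _ _ _ _ p2gt0 p21 p11 c0 n1)).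
by apply: ler_wpM2r => //; rewrite ler_nat.
Qed.
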